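(* For every tree $\Gamma$ as described, there exist coefficients $\lambda_x>0$ and $\beta_x\in\mathbb R$ ($x\in\Gamma$) such that the associated Jacobi matrix $J$ with domain $\mathcal F(\Gamma)$ is not essentially selfadjoint in $\ell^2(\Gamma)$.
   Context: Let $\Gamma$ be an infinite connected tree whose vertices are arranged in levels $\ell(x)\in\{0,1,2,\dots\}$: every vertex $x$ is adjacent to exactly one vertex $x'$ with $\ell(x')=\ell(x)+1$; for $\ell(x)\ge 1$ the set $N_x=\{y:\ y'=x\}$ of neighbours of $x$ on level $\ell(x)-1$ is finite and nonempty; $N_x=\emptyset$ if $\ell(x)=0$; there are no other edges. Given $\lambda_x>0$, $\beta_x\in\mathbb R$, the Jacobi matrix $J$ acts on functions $v:\Gamma\to\mathbb C$ by $(Jv)(x)=\lambda_x v(x')+\beta_x v(x)+\sum_{y\in N_x}\lambda_y v(y)$. $\mathcal F(\Gamma)$ denotes the finitely supported functions; $J$ with domain $\mathcal F(\Gamma)$ is symmetric in $\ell^2(\Gamma)$. *)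

(* Defs.v *)
From Stdlib Require Import Reals List.
Open Scope R_scope.

Record Cx := mkC { re : R; im : R }.
Definition C0 : Cx := mkC 0 0.
Definition Cadd (z w : Cx) : Cx := mkC (re z + re w) (im z + im w).
Definition Csub (z w : Cx) : Cx := mkC (re z - re w) (im z - im w).
Definition Cmul (z w : Cx) : Cx :=
  mkC (re z * re w - im z * im w) (re z * im w + im z * re w).
Definition Cconj (z : Cx) : Cx := mkC (re z) (- im z).
Definition Cscale (r : R) (z : Cx) : Cx := mkC (r * re z) (r * im z).
Definition Cnorm2 (z : Cx) : R := re z * re z + im z * im z.

Definition Csum {V : Type} (l : list V) (f : V -> Cx) : Cx :=
  fold_right (fun x acc => Cadd (f x) acc) C0 l.
Definition Rsum {V : Type} (l : list V) (f : V -> R) : R :=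
  fold_right (fun x acc => f x + acc) 0 l.

(** * Level trees
   Vertices V, level map [lvl], the unique upper neighbour [par x] = x',
   and [ch x] an enumeration (without repetition) of N_x = {y : y' = x}. *)
Definition is_level_tree (V : Type) (lvl : V -> nat) (par : V -> V)
  (ch : V -> list V) : Prop :=
  inhabited V /\
  (forall x, lvl (par x) = S (lvl x)) /\
  (forall x y, par y = x <-> In y (ch x)) /\
  (forall x, NoDup (ch x)) /\
  (forall x, (1 <= lvl x)%nat -> ch x <> nil) /\
  (forall x, lvl x = 0%nat -> ch x = nil) /\
  (* connectedness: any two vertices have a common ancestor *)
  (forall x y, exists m n, Nat.iter m par x = Nat.iter n par y).

Definition Japply {V : Type} (par : V -> V) (ch : V -> list V)
  (lam beta : V -> R) (v : V -> Cx) (x : V) : Cx :=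
  Cadd (Cadd (Cscale (lam x) (v (par x))) (Cscale (beta x) (v x)))
       (Csum (ch x) (fun y => Cscale (lam y) (v y))).

Definition fsupp {V : Type} (v : V -> Cx) : Prop :=
  exists l : list V, forall x, ~ In x l -> v x = C0.

(** sum_{x in V} |v x|^2 <= M  (supremum over finite sets of vertices) *)
Definition sumsq_le {V : Type} (v : V -> Cx) (M : R) : Prop :=
  forall l : list V, NoDup l -> Rsum l (fun x => Cnorm2 (v x)) <= M.

Definition in_l2 {V : Type} (v : V -> Cx) : Prop := exists M, sumsq_le v M.

Definition l2_conv {V : Type} (f : nat -> V -> Cx) (u : V -> Cx) : Prop :=
  forall eps, 0 < eps -> exists N, forall n, (N <= n)%nat ->
    sumsq_le (fun x => Csub (f n x) (u x)) eps.

(** <u, v> = sum_x conj(u x) v x = c  (unconditional sum, as a net limit over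
    finite sets of vertices) *)
Definition inner_is {V : Type} (u v : V -> Cx) (c : Cx) : Prop :=
  forall eps, 0 < eps -> exists l0 : list V, forall l, NoDup l -> incl l0 l ->
    Cnorm2 (Csub (Csum l (fun x => Cmul (Cconj (u x)) (v x))) c) < eps.

(** * Operators in l^2(V), represented by their graphs *)
Definition graph (V : Type) := (V -> Cx) -> (V -> Cx) -> Prop.

Definition Jmin {V : Type} (par : V -> V) (ch : V -> list V)
  (lam beta : V -> R) : graph V :=
  fun u w => fsupp u /\ forall x, w x = Japply par ch lam beta u x.

Definition closure {V : Type} (G : graph V) : graph V :=
  fun u w => in_l2 u /\ in_l2 w /\
    exists (f g : nat -> V -> Cx),
      (forall n, G (f n) (g n)) /\ l2_conv f u /\ l2_conv g w.

Definition adjoint {V : Type} (G : graph V) : graph V :=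
  fun u w => in_l2 u /\ in_l2 w /\
    forall f g, G f g -> exists c, inner_is w f c /\ inner_is u g c.

Definition selfadjoint {V : Type} (G : graph V) : Prop :=
  forall u w, G u w <-> adjoint G u w.

Definition ess_selfadjoint {V : Type} (G : graph V) : Prop :=
  selfadjoint (closure G).

(* Main.v *)
Require Import Defs.
From Stdlib Require Import Reals List Permutation ClassicalEpsilon Classical Lia Lra.
Open Scope R_scope.

Lemma Rsum_cons {V} (x : V) l f : Rsum (x :: l) f = f x + Rsum l f.
Proof. reflexivity. Qed.

Lemma Rsum_nil {V} (f : V -> R) : Rsum nil f = 0.
Proof. reflexivity. Qed.

Lemma Rsum_app {V} (l1 l2 : list V) f : Rsum (l1 ++ l2) f = Rsum l1 f + Rsum l2 f.
Proof. induction l1; simpl; [lra|]. unfold Rsum in *. simpl. rewrite IHl1. lra. Qed.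

Lemma Rsum_perm {V} (l1 l2 : list V) f : Permutation l1 l2 -> Rsum l1 f = Rsum l2 f.
Proof. induction 1; unfold Rsum in *; simpl in *; lra. Qed.

Lemma Rsum_ext_in {V} (l : list V) f g : (forall x, In x l -> f x = g x) -> Rsum l f = Rsum l g.
Proof. induction l; intros H; simpl; auto. unfold Rsum in *; simpl.
  rewrite H by (left; auto). rewrite IHl; auto. intros; apply H; right; auto. Qed.

Lemma Rsum_zero {V} (l : list V) f : (forall x, In x l -> f x = 0) -> Rsum l f = 0.
Proof. intros H. transitivity (Rsum l (fun _ => 0)). apply Rsum_ext_in; auto.
  induction l; simpl; auto. unfold Rsum in *; simpl in *. rewrite IHl; try lra. intros; apply H; right; auto. Qed.

Lemma Rsum_plus {V} (l : list V) f g : Rsum l (fun x => f x + g x) = Rsum l f + Rsum l g.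
Proof. induction l; unfold Rsum in *; simpl; [lra|]. rewrite IHl. lra. Qed.

Lemma Rsum_minus {V} (l : list V) f g : Rsum l (fun x => f x - g x) = Rsum l f - Rsum l g.
Proof. induction l; unfold Rsum in *; simpl; [lra|]. rewrite IHl. lra. Qed.

Lemma Rsum_scal {V} (l : list V) c f : Rsum l (fun x => c * f x) = c * Rsum l f.
Proof. induction l; unfold Rsum in *; simpl; [lra|]. rewrite IHl. lra. Qed.

Lemma Rsum_const {V} (l : list V) c : Rsum l (fun _ => c) = INR (length l) * c.
Proof. induction l. simpl; unfold Rsum; simpl; lra. rewrite Rsum_cons, IHl. change (length (a :: l)) with (S (length l)). rewrite S_INR. lra. Qed.

Lemma Rsum_le {V} (l : list V) f g : (forall x, In x l -> f x <= g x) -> Rsum l f <= Rsum l g.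
Proof. induction l; intros H; unfold Rsum in *; simpl; [lra|].
  assert (f a <= g a) by (apply H; left; auto).
  assert (fold_right (fun (x : V) (acc : R) => f x + acc) 0 l <= fold_right (fun (x : V) (acc : R) => g x + acc) 0 l)
   by (apply IHl; intros; apply H; right; auto). lra. Qed.

Lemma Rsum_nonneg {V} (l : list V) f : (forall x, f x >= 0) -> Rsum l f >= 0.
Proof. induction l; intros H; unfold Rsum in *; simpl; [lra|]. specialize (IHl H). specialize (H a). lra. Qed.

Lemma Rsum_abs_le {V} (l : list V) f : Rabs (Rsum l f) <= Rsum l (fun x => Rabs (f x)).
Proof. induction l; unfold Rsum in *; simpl. rewrite Rabs_R0; lra.
  eapply Rle_trans. apply Rabs_triang. lra. Qed.

Lemma Rsum_swap {V W} (l1 : list V) (l2 : list W) F :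
  Rsum l1 (fun x => Rsum l2 (fun y => F x y)) = Rsum l2 (fun y => Rsum l1 (fun x => F x y)).
Proof. induction l1.
  - rewrite Rsum_nil. rewrite Rsum_zero; auto.
  - rewrite Rsum_cons, IHl1.
    rewrite <- Rsum_plus. apply Rsum_ext_in. intros. reflexivity. Qed.

Lemma incl_perm {V} (K l : list V) : NoDup K -> NoDup l -> incl K l ->
  exists l', Permutation l (K ++ l').
Proof. revert l. induction K as [|k K IH]; intros l HK Hl Hi.
  - exists l; simpl; auto.
  - assert (In k l) by (apply Hi; left; auto).
    destruct (in_split _ _ H) as [l1 [l2 E]]. subst l.
    inversion HK; subst.
    destruct (IH (l1 ++ l2)) as [l' Hp]; auto.
    + eapply NoDup_remove_1; eauto.
    + intros y Hy. assert (In y (l1 ++ k :: l2)) by (apply Hi; right; auto).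
      apply in_app_or in H0. apply in_or_app. destruct H0 as [H0|H0]; auto.
      destruct H0; auto. subst; contradiction.
    + exists l'. simpl. eapply perm_trans. apply Permutation_sym, Permutation_middle. auto. Qed.

Lemma Rsum_restrict {V} (K l : list V) f : NoDup K -> NoDup l -> incl K l ->
  (forall x, ~ In x K -> f x = 0) -> Rsum l f = Rsum K f.
Proof. intros HK Hl Hi Hf. destruct (incl_perm K l HK Hl Hi) as [l' Hp].
  rewrite (Rsum_perm _ _ _ Hp), Rsum_app. rewrite (Rsum_zero l'). lra.
  intros x Hx. apply Hf. intros HxK.
  assert (NoDup (K ++ l')) by (eapply Permutation_NoDup; eauto).
  apply NoDup_app_remove_l in H as H'. 
  clear -H HxK Hx. induction K. auto. inversion H; subst. destruct HxK.
  subst. apply H2. apply in_or_app; auto. apply IHK; auto. Qed.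

Lemma sum_le_incl {V} (l K : list V) h : NoDup l -> (forall x, h x >= 0) ->
  (forall x, In x l -> h x <> 0 -> In x K) -> Rsum l h <= Rsum K h.
Proof. revert K. induction l as [|x l IH]; intros K Hl Hh Hs.
  - simpl. apply Rge_le, Rsum_nonneg; auto.
  - inversion Hl; subst. rewrite Rsum_cons.
    destruct (Req_dec (h x) 0) as [E|E].
    + rewrite E. assert (Rsum l h <= Rsum K h); [|lra]. apply IH; auto.
      intros; apply Hs; auto; right; auto.
    + assert (In x K) by (apply Hs; auto; left; auto).
      destruct (in_split _ _ H) as [K1 [K2 EK]]. subst K.
      rewrite Rsum_app, Rsum_cons.
      assert (Rsum l h <= Rsum (K1 ++ K2) h).
      { apply IH; auto. intros y Hy Hy0. assert (In y (K1 ++ x :: K2)) by (apply Hs; auto; right; auto).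
        apply in_app_or in H0; apply in_or_app. destruct H0 as [H0|[H0|H0]]; auto. subst; contradiction. }
      rewrite Rsum_app in H0. lra. Qed.

Lemma nodupify {V} (K : list V) : exists l, NoDup l /\ incl K l.
Proof. induction K as [|k K [l [Hl Hi]]].
  - exists nil. split. constructor. intros x H; destruct H.
  - destruct (classic (In k l)).
    + exists l; split; auto. intros y [E|Hy]; subst; auto.
    + exists (k :: l); split. constructor; auto. intros y [E|Hy]; [left; auto| right; auto]. Qed.

Definition SS {V} (l : list V) (a b : V -> Cx) : Cx := Csum l (fun x => Cmul (Cconj (a x)) (b x)).

Lemma re_Csum {V} (l : list V) h : re (Csum l h) = Rsum l (fun x => re (h x)).
Proof. induction l; simpl; auto. rewrite IHl. reflexivity. Qed.
Lemma im_Csum {V} (l : list V) h : im (Csum l h) = Rsum l (fun x => im (h x)).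
Proof. induction l; simpl; auto. rewrite IHl. reflexivity. Qed.

Lemma re_SS {V} (l : list V) a b : re (SS l a b) = Rsum l (fun x => re (a x) * re (b x) + im (a x) * im (b x)).
Proof. unfold SS. rewrite re_Csum. apply Rsum_ext_in. intros. simpl. ring. Qed.
Lemma im_SS {V} (l : list V) a b : im (SS l a b) = Rsum l (fun x => re (a x) * im (b x) - im (a x) * re (b x)).
Proof. unfold SS. rewrite im_Csum. apply Rsum_ext_in. intros. simpl. ring. Qed.

Lemma re_SS_sub {V} (l : list V) a b1 b2 :
  re (SS l a (fun x => Csub (b1 x) (b2 x))) = re (SS l a b1) - re (SS l a b2).
Proof. rewrite !re_SS, <- Rsum_minus. apply Rsum_ext_in. intros; simpl; ring. Qed.
Lemma im_SS_sub {V} (l : list V) a b1 b2 :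
  im (SS l a (fun x => Csub (b1 x) (b2 x))) = im (SS l a b1) - im (SS l a b2).
Proof. rewrite !im_SS, <- Rsum_minus. apply Rsum_ext_in. intros; simpl; ring. Qed.

Lemma amgm p q r s : Rabs (p*q + r*s) <= (p*p+q*q+r*r+s*s)/2.
Proof. pose proof (Rle_0_sqr (p-q)). pose proof (Rle_0_sqr (r-s)).
  pose proof (Rle_0_sqr (p+q)). pose proof (Rle_0_sqr (r+s)). unfold Rsqr in *.
  destruct (Rcase_abs (p*q+r*s)); [rewrite Rabs_left|rewrite Rabs_right]; lra. Qed.

Lemma amgm_t t p q r s : 0 < t -> Rabs (p*q + r*s) <= (t*(p*p+r*r) + (q*q+s*s)/t)/2.
Proof. intros Ht. set (q' := q/t). set (s' := s/t).
  assert (q = t*q') by (unfold q'; field; lra). assert (s = t*s') by (unfold s'; field; lra).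
  rewrite H, H0. replace (p * (t * q') + r * (t * s')) with (t*(p*q'+r*s')) by ring.
  rewrite Rabs_mult, Rabs_right by lra.
  replace ((t * (p * p + r * r) + (t * q' * (t * q') + t * s' * (t * s')) / t) / 2)
    with (t * ((p*p+q'*q'+r*r+s'*s')/2)) by (field; lra).
  apply Rmult_le_compat_l; [lra|]. apply amgm. Qed.

Lemma sumsq_nonneg {V} (A : V -> Cx) M : sumsq_le A M -> 0 <= M.
Proof. intros H. specialize (H nil (NoDup_nil _)). simpl in H. exact H. Qed.

Lemma Cnorm2_nonneg z : 0 <= Cnorm2 z.
Proof. unfold Cnorm2. pose proof (Rle_0_sqr (re z)). pose proof (Rle_0_sqr (im z)). unfold Rsqr in *. lra. Qed.

Lemma KB {V} (A : V -> Cx) M : sumsq_le A M -> forall δ, 0 < δ -> exists η, 0 < η /\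
  forall d, sumsq_le d η -> forall l, NoDup l ->
    Rabs (re (SS l A d)) <= δ /\ Rabs (im (SS l A d)) <= δ.
Proof. intros HA δ Hδ. pose proof (sumsq_nonneg _ _ HA) as HM.
  set (t := δ / (M+1)). assert (Ht : 0 < t) by (unfold t; apply Rdiv_lt_0_compat; lra).
  exists (δ * t). split. apply Rmult_lt_0_compat; lra. intros d Hd l Hl.
  assert (Hb : (t * Rsum l (fun x => Cnorm2 (A x)) + Rsum l (fun x => Cnorm2 (d x)) / t)/2 <= δ).
  { specialize (HA l Hl). specialize (Hd l Hl).
    assert (t * Rsum l (fun x => Cnorm2 (A x)) <= t * M) by (apply Rmult_le_compat_l; lra).
    assert (Rsum l (fun x => Cnorm2 (d x)) / t <= δ * t / t) by (apply Rmult_le_compat_r; [apply Rlt_le, Rinv_0_lt_compat; lra| lra]).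
    assert (δ * t / t = δ) by (field; lra).
    assert (t * M <= δ). { unfold t. replace (δ / (M + 1) * M) with (δ * (M/(M+1))) by (field; lra). assert (M / (M+1) <= 1). { assert (0 < /(M+1)) by (apply Rinv_0_lt_compat; lra). replace (M/(M+1)) with (1 - /(M+1)) by (field; lra). lra. } pose proof (Rmult_le_compat_l δ _ _ (Rlt_le _ _ Hδ) H2). lra. }
    lra. }
  assert (Hg : forall g : V -> R, (forall x, Rabs (g x) <= (t * Cnorm2 (A x) + Cnorm2 (d x) / t)/2) -> Rabs (Rsum l g) <= δ).
  { intros g Hg. eapply Rle_trans. apply Rsum_abs_le. eapply Rle_trans; [|exact Hb].
    eapply Rle_trans. apply Rsum_le. intros x _. apply Hg.
    rewrite (Rsum_ext_in l _ (fun x => (/2 * t) * Cnorm2 (A x) + (/2 * /t) * Cnorm2 (d x))) by (intros; field; lra).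
    rewrite Rsum_plus, !Rsum_scal. apply Req_le. field. lra. }
  split.
  - rewrite re_SS. apply Hg. intros x. unfold Cnorm2. eapply Rle_trans. apply (amgm_t t); exact Ht. apply Req_le. reflexivity.
  - rewrite im_SS. apply Hg. intros x. unfold Cnorm2.
    replace (re (A x) * im (d x) - im (A x) * re (d x)) with (re (A x) * im (d x) + (- im (A x)) * re (d x)) by ring.
    eapply Rle_trans. apply (amgm_t t); exact Ht. apply Req_le. unfold Rdiv. ring. Qed.

Lemma Rabs_le_between a b : Rabs a <= b -> - b <= a <= b.
Proof. intros H. destruct (Rcase_abs a); [rewrite Rabs_left in H|rewrite Rabs_right in H]; lra. Qed.

Lemma small_parts z δ : 0 < δ -> Cnorm2 z < δ * δ -> Rabs (re z) < δ /\ Rabs (im z) < δ.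
Proof. intros Hd H. unfold Cnorm2 in H.
  pose proof (Rle_0_sqr (re z)). pose proof (Rle_0_sqr (im z)). unfold Rsqr in *.
  split; rewrite <- (Rabs_right δ) by lra; apply Rsqr_lt_abs_0; unfold Rsqr; lra. Qed.

Lemma sq_lt x δ : Rabs x < δ -> x * x < δ * δ.
Proof. intros H. pose proof (Rabs_pos x).
  replace (x*x) with (Rabs x * Rabs x) by (rewrite <- Rabs_mult; apply Rabs_right; pose proof (Rle_0_sqr x); unfold Rsqr in *; lra).
  assert (Rabs x * Rabs x <= Rabs x * δ) by (apply Rmult_le_compat_l; lra).
  assert (Rabs x * δ < δ * δ) by (apply Rmult_lt_compat_r; lra). lra. Qed.

Lemma parts_small z δ eps : Rabs (re z) < δ -> Rabs (im z) < δ -> 2*(δ*δ) <= eps -> Cnorm2 z < eps.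
Proof. intros H1 H2 H3. unfold Cnorm2. apply sq_lt in H1. apply sq_lt in H2. lra. Qed.

Lemma inner_get {V} (A b : V -> Cx) c δ : inner_is A b c -> 0 < δ -> exists l0, forall l, NoDup l -> incl l0 l ->
  Rabs (re (SS l A b) - re c) < δ /\ Rabs (im (SS l A b) - im c) < δ.
Proof. intros H Hd. destruct (H (δ*δ)) as [l0 Hl0]. apply Rmult_lt_0_compat; lra.
  exists l0. intros l Hl Hi. apply (small_parts _ _ Hd (Hl0 l Hl Hi)). Qed.

Lemma LIM1 {V} (A : V -> Cx) (F : nat -> V -> Cx) f c : in_l2 A ->
  (forall n, inner_is A (F n) (c n)) -> l2_conv F f ->
  forall ε, 0 < ε -> exists N, forall n m, (N <= n)%nat -> (N <= m)%nat ->
    Rabs (re (c n) - re (c m)) < ε /\ Rabs (im (c n) - im (c m)) < ε.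
Proof. intros [M HA] Hc Hconv ε Hε.
  destruct (KB A M HA (ε/4)) as [η [Hη Hd]]. lra.
  destruct (Hconv η Hη) as [N HN]. exists N. intros n m Hn Hm.
  destruct (inner_get A (F n) (c n) (ε/4) (Hc n)) as [ln Hln]. lra.
  destruct (inner_get A (F m) (c m) (ε/4) (Hc m)) as [lm Hlm]. lra.
  destruct (nodupify (ln ++ lm)) as [l [Hl Hi]].
  assert (Hi1 : incl ln l) by (intros y Hy; apply Hi; apply in_or_app; auto).
  assert (Hi2 : incl lm l) by (intros y Hy; apply Hi; apply in_or_app; auto).
  destruct (Hln l Hl Hi1) as [A1 B1]. destruct (Hlm l Hl Hi2) as [A2 B2].
  destruct (Hd _ (HN n Hn) l Hl) as [A3 B3]. destruct (Hd _ (HN m Hm) l Hl) as [A4 B4].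
  rewrite re_SS_sub in A3, A4. rewrite im_SS_sub in B3, B4.
  split.
  - apply Rabs_def2 in A1. apply Rabs_def2 in A2. apply Rabs_le_between in A3. apply Rabs_le_between in A4.
    apply Rabs_def1; lra.
  - apply Rabs_def2 in B1. apply Rabs_def2 in B2. apply Rabs_le_between in B3. apply Rabs_le_between in B4.
    apply Rabs_def1; lra. Qed.

Lemma LIM2 {V} (A : V -> Cx) (F : nat -> V -> Cx) f c cr ci : in_l2 A ->
  (forall n, inner_is A (F n) (c n)) -> l2_conv F f ->
  Un_cv (fun n => re (c n)) cr -> Un_cv (fun n => im (c n)) ci -> inner_is A f (mkC cr ci).
Proof. intros [M HA] Hc Hconv Hr Hi eps Heps.
  set (δ := Rmin 1 (eps/4)).
  assert (Hδ : 0 < δ) by (unfold δ; apply Rmin_pos; lra).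
  assert (Hδ1 : δ <= 1) by apply Rmin_l. assert (Hδ2 : δ <= eps/4) by apply Rmin_r.
  destruct (KB A M HA (δ/3)) as [η [Hη Hd]]. lra.
  destruct (Hconv η Hη) as [N1 HN1].
  destruct (Hr (δ/3)) as [N2 HN2]. lra. destruct (Hi (δ/3)) as [N3 HN3]. lra.
  set (n := (N1 + N2 + N3)%nat).
  destruct (inner_get A (F n) (c n) (δ/3) (Hc n)) as [l0 Hl0]. lra.
  exists l0. intros l Hl Hil.
  destruct (Hl0 l Hl Hil) as [A1 B1].
  destruct (Hd _ (HN1 n ltac:(unfold n; lia)) l Hl) as [A3 B3].
  specialize (HN2 n ltac:(unfold n; lia)). specialize (HN3 n ltac:(unfold n; lia)).
  unfold R_dist in HN2, HN3.
  rewrite re_SS_sub in A3. rewrite im_SS_sub in B3.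
  apply (parts_small _ δ); simpl.
  - apply Rabs_def2 in A1. apply Rabs_def2 in HN2. apply Rabs_le_between in A3.
    apply Rabs_def1; fold (SS l A f); lra.
  - apply Rabs_def2 in B1. apply Rabs_def2 in HN3. apply Rabs_le_between in B3.
    apply Rabs_def1; fold (SS l A f); lra.
  - assert (δ * δ <= δ * 1) by (apply Rmult_le_compat_l; lra). lra. Qed.

Lemma inner_exact {V} (a b : V -> Cx) c : (exists l0, forall l, NoDup l -> incl l0 l ->
  re (SS l a b) = re c /\ im (SS l a b) = im c) -> inner_is a b c.
Proof. intros [l0 H] eps Heps. exists l0. intros l Hl Hi. destruct (H l Hl Hi) as [H1 H2].
  unfold Cnorm2. simpl. fold (SS l a b). rewrite H1, H2. lra. Qed.

Definition dd {V} (z y : V) : R := if excluded_middle_informative (y = z) then 1 else 0.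

Definition Jr {V} (par : V -> V) (ch : V -> list V) (lam beta : V -> R) (p : V -> R) (x : V) : R :=
  lam x * p (par x) + beta x * p x + Rsum (ch x) (fun y => lam y * p y).

Lemma re_Japply {V} par ch lam beta (v : V -> Cx) x :
  re (Japply par ch lam beta v x) = Jr par ch lam beta (fun y => re (v y)) x.
Proof. unfold Japply, Jr. simpl. rewrite re_Csum. reflexivity. Qed.
Lemma im_Japply {V} par ch lam beta (v : V -> Cx) x :
  im (Japply par ch lam beta v x) = Jr par ch lam beta (fun y => im (v y)) x.
Proof. unfold Japply, Jr. simpl. rewrite im_Csum. reflexivity. Qed.

Lemma Jr_ext {V} par ch lam beta (p q : V -> R) x : (forall y, p y = q y) ->
  Jr par ch lam beta p x = Jr par ch lam beta q x.
Proof. intros H. unfold Jr. rewrite !H. f_equal. apply Rsum_ext_in. intros; rewrite H; auto. Qed.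

Lemma Jr_sum {V} par ch lam beta (K : list V) (g : V -> V -> R) x :
  Jr par ch lam beta (fun y => Rsum K (fun z => g z y)) x = Rsum K (fun z => Jr par ch lam beta (g z) x).
Proof. unfold Jr. rewrite !Rsum_plus. rewrite <- !Rsum_scal. f_equal.
  rewrite (Rsum_ext_in (ch x) _ (fun y => Rsum K (fun z => lam y * g z y))) by (intros; rewrite Rsum_scal; auto).
  apply Rsum_swap. Qed.

Lemma Jr_scal {V} par ch lam beta (p : V -> R) c x :
  Jr par ch lam beta (fun y => p y * c) x = Jr par ch lam beta p x * c.
Proof. unfold Jr. rewrite (Rsum_ext_in (ch x) _ (fun y => c * (lam y * p y))) by (intros; ring).
  rewrite Rsum_scal. ring. Qed.

Lemma dd_eq {V} (z : V) : dd z z = 1.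
Proof. unfold dd. destruct (excluded_middle_informative (z = z)); auto. contradiction. Qed.
Lemma dd_neq {V} (z y : V) : y <> z -> dd z y = 0.
Proof. unfold dd. destruct (excluded_middle_informative (y = z)); auto. contradiction. Qed.

Lemma Rsum_single {V} (l : list V) (z : V) f : NoDup l -> In z l -> (forall x, x <> z -> f x = 0) ->
  Rsum l f = f z.
Proof. intros Hl Hz Hf. rewrite (Rsum_restrict (z :: nil) l f); auto.
  simpl. unfold Rsum; simpl. lra. constructor; auto. constructor.
  intros y [E|[]]; subst; auto. intros x Hx. apply Hf. intros E; subst; apply Hx; left; auto. Qed.

Lemma core {V} (par : V -> V) (ch : V -> list V) lam beta
  (Hch : forall x y, par y = x <-> In y (ch x)) (Hnd : forall x, NoDup (ch x))
  (z : V) (p : V -> R) (l : list V) : NoDup l -> incl (ch z ++ z :: par z :: nil) l ->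
  Rsum l (fun x => Jr par ch lam beta (dd z) x * p x) = Jr par ch lam beta p z.
Proof. intros Hl Hi.
  assert (Hchx : forall x, Rsum (ch x) (fun y => lam y * dd z y) = if excluded_middle_informative (x = par z) then lam z else 0).
  { intros x. destruct (excluded_middle_informative (x = par z)) as [E|E].
    - rewrite (Rsum_single (ch x) z); auto. rewrite dd_eq; ring. apply Hch; auto.
      intros y Hy; rewrite dd_neq; auto; ring.
    - apply Rsum_zero. intros y Hy. rewrite dd_neq. ring. intros Eq; subst. apply E. symmetry; apply Hch; auto. }
  unfold Jr at 1.
  rewrite (Rsum_ext_in l _ (fun x => (lam x * dd z (par x) * p x + beta x * dd z x * p x) +
     (if excluded_middle_informative (x = par z) then lam z else 0) * p x))
    by (intros x _; rewrite Hchx; ring).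
  rewrite !Rsum_plus.
  rewrite (Rsum_restrict (ch z) l); auto.
  2: intros y Hy; apply Hi; apply in_or_app; auto.
  2: intros x Hx; rewrite dd_neq; [ring|]; intros E; apply Hx; apply Hch; auto.
  rewrite (Rsum_single l z (fun x => beta x * dd z x * p x)); auto.
  2: apply Hi; apply in_or_app; right; left; auto.
  2: intros x Hx; rewrite dd_neq; auto; ring.
  rewrite (Rsum_single l (par z)); auto.
  2: apply Hi; apply in_or_app; right; right; left; auto.
  2: intros x Hx; destruct (excluded_middle_informative (x = par z)); [contradiction|ring].
  unfold Jr. rewrite dd_eq. destruct (excluded_middle_informative (par z = par z)); [|contradiction].
  rewrite (Rsum_ext_in (ch z) _ (fun y => lam y * p y)). ring.
  intros y Hy. assert (par y = z) by (apply Hch; auto). rewrite H, dd_eq. ring. Qed.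

Lemma rep {V} (K : list V) (f : V -> R) : NoDup K -> (forall x, ~ In x K -> f x = 0) ->
  forall y, f y = Rsum K (fun z => dd z y * f z).
Proof. intros HK Hf y. destruct (classic (In y K)) as [Hy|Hy].
  - rewrite (Rsum_single K y); auto. rewrite dd_eq; ring. intros x Hx. rewrite dd_neq; auto. ring.
  - rewrite Hf by auto. symmetry; apply Rsum_zero. intros x Hx. rewrite dd_neq. ring.
    intros E; subst; contradiction. Qed.

Lemma FS {V} (par : V -> V) (ch : V -> list V) lam beta
  (Hch : forall x y, par y = x <-> In y (ch x)) (Hnd : forall x, NoDup (ch x))
  (a : V -> Cx) (K : list V) (f : V -> Cx) : NoDup K -> (forall x, ~ In x K -> f x = C0) ->
  inner_is (Japply par ch lam beta a) f (SS K (Japply par ch lam beta a) f) /\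
  inner_is a (Japply par ch lam beta f) (SS K (Japply par ch lam beta a) f).
Proof. intros HK Hf. set (Ja := Japply par ch lam beta a).
  assert (Hre : forall y, re (f y) = Rsum K (fun z => dd z y * re (f z))).
  { apply rep; auto. intros x Hx; rewrite Hf; auto. }
  assert (Him : forall y, im (f y) = Rsum K (fun z => dd z y * im (f z))).
  { apply rep; auto. intros x Hx; rewrite Hf; auto. }
  assert (HJre : forall x, re (Japply par ch lam beta f x) = Rsum K (fun z => Jr par ch lam beta (dd z) x * re (f z))).
  { intros x. rewrite re_Japply. rewrite (Jr_ext _ _ _ _ _ _ x Hre). rewrite Jr_sum.
    apply Rsum_ext_in; intros. apply Jr_scal. }
  assert (HJim : forall x, im (Japply par ch lam beta f x) = Rsum K (fun z => Jr par ch lam beta (dd z) x * im (f z))).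
  { intros x. rewrite im_Japply. rewrite (Jr_ext _ _ _ _ _ _ x Him). rewrite Jr_sum.
    apply Rsum_ext_in; intros. apply Jr_scal. }
  split.
  - apply inner_exact. exists K. intros l Hl Hi.
    rewrite re_SS, im_SS, re_SS, im_SS.
    split; apply Rsum_restrict; auto; intros x Hx; rewrite Hf by auto; simpl; ring.
  - apply inner_exact. exists (flat_map (fun z => ch z ++ z :: par z :: nil) K). intros l Hl Hi.
    assert (Hinc : forall z, In z K -> incl (ch z ++ z :: par z :: nil) l).
    { intros z Hz y Hy. apply Hi. apply in_flat_map. exists z; auto. }
    rewrite re_SS, im_SS, re_SS, im_SS. split.
    + rewrite (Rsum_ext_in l _ (fun x => Rsum K (fun z => re (f z) * (Jr par ch lam beta (dd z) x * re (a x))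
                                                   + im (f z) * (Jr par ch lam beta (dd z) x * im (a x))))).
      2:{ intros x _. rewrite HJre, HJim. rewrite <- !Rsum_scal, <- Rsum_plus. apply Rsum_ext_in. intros; ring. }
      rewrite Rsum_swap. apply Rsum_ext_in. intros z Hz.
      rewrite Rsum_plus, !Rsum_scal. rewrite !core; auto.
      unfold Ja. rewrite re_Japply, im_Japply. ring.
    + rewrite (Rsum_ext_in l _ (fun x => Rsum K (fun z => im (f z) * (Jr par ch lam beta (dd z) x * re (a x))
                                                   - re (f z) * (Jr par ch lam beta (dd z) x * im (a x))))).
      2:{ intros x _. rewrite HJre, HJim. rewrite <- !Rsum_scal, <- Rsum_minus. apply Rsum_ext_in. intros; ring. }
      rewrite Rsum_swap. apply Rsum_ext_in. intros z Hz.
      rewrite Rsum_minus, !Rsum_scal. rewrite !core; auto.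
      unfold Ja. rewrite re_Japply, im_Japply. ring. Qed.

Lemma Csum_ext {V} (l : list V) h h' : (forall x, h x = h' x) -> Csum l h = Csum l h'.
Proof. intros H; induction l; simpl; auto. rewrite H, IHl; auto. Qed.

Lemma inner_ext {V} (a b b' : V -> Cx) c : (forall x, b x = b' x) -> inner_is a b c -> inner_is a b' c.
Proof. intros H Hi eps Heps. destruct (Hi eps Heps) as [l0 Hl0]. exists l0. intros l Hl Hil.
  rewrite <- (Csum_ext l (fun x => Cmul (Cconj (a x)) (b x))). apply Hl0; auto.
  intros; rewrite H; auto. Qed.

Lemma ADJ {V} (par : V -> V) (ch : V -> list V) lam beta
  (Hch : forall x y, par y = x <-> In y (ch x)) (Hnd : forall x, NoDup (ch x))
  (a : V -> Cx) : in_l2 a -> in_l2 (Japply par ch lam beta a) ->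
  adjoint (closure (Jmin par ch lam beta)) a (Japply par ch lam beta a).
Proof. intros Ha HJa. split; [auto|split; [auto|]].
  intros f g [Hf [Hg [F [G [HJ [HcF HcG]]]]]].
  set (Ja := Japply par ch lam beta a).
  assert (Hex : forall n, exists c, inner_is Ja (F n) c /\ inner_is a (G n) c).
  { intros n. destruct (HJ n) as [[K0 HK0] HGn].
    destruct (nodupify K0) as [K [HK HiK]].
    destruct (FS par ch lam beta Hch Hnd a K (F n)) as [H1 H2]; auto.
    exists (SS K Ja (F n)). split; auto.
    apply (inner_ext _ _ _ _ (fun x => eq_sym (HGn x))). exact H2. }
  set (c := fun n => proj1_sig (constructive_indefinite_description _ (Hex n))).
  assert (Hc : forall n, inner_is Ja (F n) (c n) /\ inner_is a (G n) (c n)).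
  { intros n. unfold c. destruct (constructive_indefinite_description _ (Hex n)); simpl; auto. }
  pose proof (LIM1 Ja F f c HJa (fun n => proj1 (Hc n)) HcF) as HC.
  assert (Cr : Cauchy_crit (fun n => re (c n))).
  { intros e He. destruct (HC e He) as [N HN]. exists N. intros n m Hn Hm. unfold R_dist.
    apply (HN n m); lia. }
  assert (Ci : Cauchy_crit (fun n => im (c n))).
  { intros e He. destruct (HC e He) as [N HN]. exists N. intros n m Hn Hm. unfold R_dist.
    apply (HN n m); lia. }
  destruct (R_complete _ Cr) as [cr Hcr]. destruct (R_complete _ Ci) as [ci Hci].
  exists (mkC cr ci). split.
  - apply (LIM2 Ja F f c); auto. intros n; apply Hc.
  - apply (LIM2 a G g c); auto. intros n; apply Hc. Qed.

Lemma geom {V} (B : nat -> list V) (h : V -> R) : (forall x, h x >= 0) ->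
  (forall n, Rsum (B n) h <= (/4)^n) -> forall N k, Rsum (flat_map B (seq k N)) h <= 4/3 * (/4)^k.
Proof. intros Hh HB N. induction N; intros k.
  - simpl. unfold Rsum; simpl. pose proof (pow_lt (/4) k). assert (0 < /4) by lra. specialize (H H0). lra.
  - simpl. rewrite Rsum_app. specialize (IHN (S k)). specialize (HB k). simpl in IHN. lra. Qed.

Lemma IL {V} (B : nat -> list V) (h : V -> R) : (forall x, h x >= 0) ->
  (forall n, Rsum (B n) h <= (/4)^n) -> (forall x, h x <> 0 -> exists n, In x (B n)) ->
  forall l, NoDup l -> Rsum l h <= 4/3.
Proof. intros Hh HB Hs l Hl.
  assert (HN : exists N, forall x, In x l -> h x <> 0 -> In x (flat_map B (seq 0 N))).
  { clear Hl. induction l as [|x l [N HN]].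
    - exists 0%nat. intros x [].
    - destruct (Req_dec (h x) 0) as [E|E].
      + exists N. intros y [Ey|Hy] Hy0; [subst; contradiction|auto].
      + destruct (Hs x E) as [n Hn]. exists (max N (S n)). intros y Hy Hy0.
        apply in_flat_map.
        destruct Hy as [Ey|Hy].
        * subst. exists n. split; auto. apply in_seq. lia.
        * destruct (proj1 (in_flat_map _ _ _) (HN y Hy Hy0)) as [k [Hk1 Hk2]].
          apply in_seq in Hk1. exists k. split; auto. apply in_seq. lia. }
  destruct HN as [N HN].
  eapply Rle_trans. apply (sum_le_incl l (flat_map B (seq 0 N))); auto.
  pose proof (geom B h Hh HB N 0). simpl in H. lra. Qed.

Lemma inner_close {V} (a b : V -> Cx) c1 c2 : inner_is a b c1 -> inner_is a b c2 ->
  forall δ, 0 < δ -> Rabs (im c1 - im c2) < 2 * δ.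
Proof. intros H1 H2 δ Hδ.
  destruct (inner_get a b c1 δ H1 Hδ) as [l1 Hl1]. destruct (inner_get a b c2 δ H2 Hδ) as [l2 Hl2].
  destruct (nodupify (l1 ++ l2)) as [l [Hl Hi]].
  destruct (Hl1 l Hl) as [_ A1]. intros y Hy; apply Hi; apply in_or_app; auto.
  destruct (Hl2 l Hl) as [_ A2]. intros y Hy; apply Hi; apply in_or_app; auto.
  apply Rabs_def2 in A1. apply Rabs_def2 in A2. apply Rabs_def1; lra. Qed.

Fixpoint cpow (n : nat) : Cx :=
  match n with O => mkC 1 0 | S n => mkC (- im (cpow n) / 2) (re (cpow n) / 2) end.

Lemma cpow_norm n : Cnorm2 (cpow n) = (/4)^n.
Proof. induction n; unfold Cnorm2 in *; simpl. lra. rewrite <- IHn. field. Qed.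

Lemma Rsum_single_in {V} (l : list V) (z : V) f : NoDup l -> In z l -> (forall x, In x l -> x <> z -> f x = 0) ->
  Rsum l f = f z.
Proof. intros Hl Hz Hf.
  rewrite (Rsum_ext_in l f (fun x => if excluded_middle_informative (In x l) then f x else 0)).
  2:{ intros x Hx. destruct (excluded_middle_informative (In x l)); auto; contradiction. }
  rewrite (Rsum_single l z); auto.
  destruct (excluded_middle_informative (In z l)); auto; contradiction.
  intros x Hx. destruct (excluded_middle_informative (In x l)); auto. Qed.

Lemma Cx_ext z w : re z = re w -> im z = im w -> z = w.
Proof. destruct z, w; simpl; intros; subst; auto. Qed.

Theorem theorem3 (V : Type) (lvl : V -> nat) (par : V -> V) (ch : V -> list V)
  (HT : is_level_tree V lvl par ch) :
  exists (lam beta : V -> R),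
    (forall x, 0 < lam x) /\ ~ ess_selfadjoint (Jmin par ch lam beta).
Proof.
  destruct HT as [[v] [Hlvl [Hch [Hnd [Hne [H0 _]]]]]].
  assert (Hx0 : exists x0, lvl x0 = 0%nat).
  { assert (forall n x, lvl x = n -> exists y, lvl y = 0%nat).
    { induction n; intros x Hx. exists x; auto.
      destruct (ch x) as [|y l] eqn:E. exfalso; apply (Hne x); [lia|auto].
      assert (par y = x) by (apply Hch; rewrite E; left; auto).
      apply (IHn y). rewrite <- H, Hlvl in Hx. lia. }
    exact (H _ v eq_refl). }
  destruct Hx0 as [x0 Hx0].
  set (ray := fun n => Nat.iter n par x0).
  assert (Hray_par : forall n, par (ray n) = ray (S n)) by reflexivity.
  assert (Hlvl_ray : forall n, lvl (ray n) = n).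
  { induction n. exact Hx0. rewrite <- Hray_par, Hlvl, IHn. auto. }
  set (onray := fun x => x = ray (lvl x)).
  assert (onray_ray : forall n, onray (ray n)) by (intros n; unfold onray; rewrite Hlvl_ray; auto).
  assert (ch_onray : forall x y, In y (ch x) -> onray y -> onray x).
  { intros x y Hy Ho. apply Hch in Hy. unfold onray in *. subst x. rewrite Ho at 1.
    rewrite Hray_par, Hlvl. auto. }
  assert (onray_ch : forall m y, In y (ch (ray (S m))) -> onray y -> y = ray m).
  { intros m y Hy Ho. apply Hch in Hy. unfold onray in Ho. rewrite Ho.
    assert (lvl (par y) = S m) by (rewrite Hy; apply Hlvl_ray). rewrite Hlvl in H. congruence. }
  assert (Hlen : forall x, (0 < length (ch (par x)))%nat).
  { intros x. assert (In x (ch (par x))) by (apply Hch; auto). destruct (ch (par x)); simpl in *; [contradiction|lia]. }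
  set (lam := fun x => if excluded_middle_informative (onray x) then 4^(lvl x) else / INR (length (ch (par x)))).
  set (u := fun x => if excluded_middle_informative (onray x) then cpow (lvl x) else C0).
  set (beta := fun _ : V => 0).
  assert (lam_pos : forall x, 0 < lam x).
  { intros x. unfold lam. destruct (excluded_middle_informative (onray x)).
    apply pow_lt; lra. apply Rinv_0_lt_compat, lt_0_INR, Hlen. }
  exists lam, beta. split; [exact lam_pos|]. intros Hsa.
  assert (u_ray : forall n, u (ray n) = cpow n).
  { intros n. unfold u. destruct (excluded_middle_informative (onray (ray n))). rewrite Hlvl_ray; auto.
    exfalso; auto. }
  assert (u_off : forall x, ~ onray x -> u x = C0).
  { intros x Hx. unfold u. destruct (excluded_middle_informative (onray x)); auto; contradiction. }
  assert (lam_ray : forall n, lam (ray n) = 4^n).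
  { intros n. unfold lam. destruct (excluded_middle_informative (onray (ray n))). rewrite Hlvl_ray; auto.
    exfalso; auto. }
  assert (lam_off : forall x, ~ onray x -> lam x = / INR (length (ch (par x)))).
  { intros x Hx. unfold lam. destruct (excluded_middle_informative (onray x)); auto; contradiction. }
  set (Ja := Japply par ch lam beta u).
  assert (Ja_ray0 : Ja (ray O) = mkC 0 (1/2)).
  { assert (Hc0 : ch (ray O) = nil) by (apply H0; apply Hlvl_ray).
    apply Cx_ext; unfold Ja; [rewrite re_Japply|rewrite im_Japply]; unfold Jr; rewrite Hc0;
    rewrite Hray_par, lam_ray, u_ray, u_ray; unfold beta; simpl; unfold Rsum; simpl; field. }
  assert (Ja_rayS : forall m, Ja (ray (S m)) = C0).
  { intros m. assert (Hin : In (ray m) (ch (ray (S m)))) by (apply Hch; auto).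
    apply Cx_ext; unfold Ja; [rewrite re_Japply|rewrite im_Japply]; unfold Jr;
    rewrite (Rsum_single_in _ (ray m)); auto.
    all: try (intros y Hy Hne'; rewrite u_off; [simpl; ring| intros Ho; apply Hne'; apply onray_ch; auto]).
    all: rewrite Hray_par. all: rewrite !lam_ray. all: rewrite !u_ray. all: unfold beta. all: simpl. all: field. }
  assert (Ja_off : forall x, ~ onray x -> Ja x = Cscale (lam x) (u (par x))).
  { intros x Hx. apply Cx_ext; unfold Ja; [rewrite re_Japply|rewrite im_Japply]; unfold Jr;
    rewrite Rsum_zero; try (intros y Hy; rewrite u_off; [simpl; ring| intros Ho; apply Hx; eapply ch_onray; eauto]);
    rewrite (u_off x Hx); unfold beta; simpl; ring. }
  assert (C0n : Cnorm2 C0 = 0) by (unfold Cnorm2; simpl; ring).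
  assert (Hu : in_l2 u).
  { exists (4/3). intros l Hl. apply (IL (fun n => ray n :: nil) (fun x => Cnorm2 (u x))); auto.
    - intros x; apply Rle_ge, Cnorm2_nonneg.
    - intros n. unfold Rsum; simpl. rewrite u_ray, cpow_norm. lra.
    - intros x Hx. destruct (classic (onray x)) as [Ho|Ho].
      + exists (lvl x). left. symmetry; exact Ho.
      + rewrite u_off in Hx; auto. contradiction. }
  set (h1 := fun x => if excluded_middle_informative (onray (par x)) then (/4)^(lvl x) * / INR (length (ch (par x))) else 0).
  set (h2 := fun x => if excluded_middle_informative (onray x) then (/4)^(lvl x) else 0).
  assert (h1_nn : forall x, 0 <= h1 x).
  { intros x; unfold h1. destruct (excluded_middle_informative _); [|lra].
    apply Rmult_le_pos. apply pow_le; lra. apply Rlt_le, Rinv_0_lt_compat, lt_0_INR, Hlen. }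
  assert (h2_nn : forall x, 0 <= h2 x).
  { intros x; unfold h2. destruct (excluded_middle_informative _); [|lra]. apply pow_le; lra. }
  assert (Hpt : forall x, Cnorm2 (Ja x) <= h1 x + h2 x).
  { intros x. pose proof (h1_nn x). pose proof (h2_nn x). destruct (classic (onray x)) as [Ho|Ho].
    - assert (Hh2e : h2 x = (/4)^(lvl x)) by (unfold h2; destruct (excluded_middle_informative _); [auto|contradiction]).
      rewrite Hh2e. unfold onray in Ho. rewrite Ho at 1. destruct (lvl x) as [|m].
      + rewrite Ja_ray0. unfold Cnorm2; simpl. lra.
      + rewrite Ja_rayS, C0n. pose proof (pow_le (/4) (S m)). lra.
    - rewrite Ja_off by auto. rewrite lam_off by auto.
      destruct (classic (onray (par x))) as [Hp|Hp].
      + assert (Hh1e : h1 x = (/4)^(lvl x) * / INR (length (ch (par x))))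
          by (unfold h1; destruct (excluded_middle_informative _); [auto|contradiction]).
        rewrite Hh1e. assert (Hup : u (par x) = cpow (S (lvl x))) by (unfold onray in Hp; rewrite Hp at 1; rewrite u_ray, Hlvl; auto). rewrite Hup.
        replace (Cnorm2 (Cscale (/ INR (length (ch (par x)))) (cpow (S (lvl x)))))
          with (/ INR (length (ch (par x))) * / INR (length (ch (par x))) * Cnorm2 (cpow (S (lvl x))))
          by (unfold Cnorm2; simpl; ring).
        rewrite cpow_norm. simpl.
        set (w := / INR (length (ch (par x)))). set (q := (/4)^(lvl x)).
        assert (0 < w) by (apply Rinv_0_lt_compat, lt_0_INR, Hlen).
        assert (w <= 1).
        { unfold w. assert (HL : INR 1 <= INR (length (ch (par x)))) by (apply le_INR; specialize (Hlen x); lia). simpl in HL.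
          rewrite <- Rinv_1. apply Rinv_le_contravar; lra. }
        assert (0 < q) by (apply pow_lt; lra).
        assert (HH : w * w * (/4 * q) = (w * /4) * (q * w)) by ring. rewrite HH.
        assert ((w * /4) * (q * w) <= 1 * (q * w)).
        { apply Rmult_le_compat_r. apply Rmult_le_pos; lra. lra. }
        lra.
      + rewrite (u_off (par x)) by auto. replace (Cnorm2 (Cscale _ C0)) with 0 by (unfold Cnorm2; simpl; ring). lra. }
  assert (HJu : in_l2 Ja).
  { exists (4/3 + 4/3). intros l Hl.
    eapply Rle_trans. apply Rsum_le. intros x _. apply Hpt. rewrite Rsum_plus.
    assert (Rsum l h1 <= 4/3).
    { apply (IL (fun n => ch (ray (S n))) h1); auto.
      - intros x; apply Rle_ge; auto.
      - intros n. rewrite (Rsum_ext_in _ _ (fun _ => (/4)^n * / INR (length (ch (ray (S n)))))).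
        + rewrite Rsum_const. apply Req_le. field.
          apply not_0_INR. pose proof (Hlen (ray n)). rewrite Hray_par in H. lia.
        + intros y Hy. apply Hch in Hy as Hp. unfold h1.
          destruct (excluded_middle_informative (onray (par y))) as [Ho|Ho].
          * rewrite Hp. f_equal. f_equal. assert (lvl (par y) = S n) by (rewrite Hp; apply Hlvl_ray).
            rewrite Hlvl in H. lia.
          * exfalso. apply Ho. rewrite Hp. apply onray_ray.
      - intros x Hx. unfold h1 in Hx. destruct (excluded_middle_informative (onray (par x))) as [Ho|Ho]; [|contradiction].
        exists (lvl x). apply Hch. unfold onray in Ho. rewrite Ho at 1. rewrite Hlvl. auto. }
    assert (Rsum l h2 <= 4/3).
    { apply (IL (fun n => ray n :: nil) h2); auto.
      - intros x; apply Rle_ge; auto.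
      - intros n. unfold Rsum; simpl. unfold h2. destruct (excluded_middle_informative _).
        rewrite Hlvl_ray; lra. exfalso; auto.
      - intros x Hx. unfold h2 in Hx. destruct (excluded_middle_informative (onray x)) as [Ho|Ho]; [|contradiction].
        exists (lvl x). left. symmetry; exact Ho. }
    lra. }
  assert (Hsupp : forall x, x <> ray O -> u x = C0 \/ Ja x = C0).
  { intros x Hx. destruct (classic (onray x)) as [Ho|Ho].
    - right. unfold onray in Ho. rewrite Ho. destruct (lvl x) as [|m] eqn:E.
      + exfalso. apply Hx. exact Ho.
      + apply Ja_rayS.
    - left. apply u_off; auto. }
  assert (I1 : inner_is u Ja (mkC 0 (1/2))).
  { apply inner_exact. exists (ray O :: nil). intros l Hl Hi.
    assert (Hin : In (ray O) l) by (apply Hi; left; auto).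
    rewrite re_SS, im_SS. rewrite !(Rsum_single_in l (ray O)); auto.
    - rewrite Ja_ray0, u_ray. simpl. split; field.
    - intros x _ Hx. destruct (Hsupp x Hx) as [E|E]; rewrite E; simpl; ring.
    - intros x _ Hx. destruct (Hsupp x Hx) as [E|E]; rewrite E; simpl; ring. }
  assert (I2 : inner_is Ja u (mkC 0 (-1/2))).
  { apply inner_exact. exists (ray O :: nil). intros l Hl Hi.
    assert (Hin : In (ray O) l) by (apply Hi; left; auto).
    rewrite re_SS, im_SS. rewrite !(Rsum_single_in l (ray O)); auto.
    - rewrite Ja_ray0, u_ray. simpl. split; field.
    - intros x _ Hx. destruct (Hsupp x Hx) as [E|E]; rewrite E; simpl; ring.
    - intros x _ Hx. destruct (Hsupp x Hx) as [E|E]; rewrite E; simpl; ring. }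
  pose proof (ADJ par ch lam beta Hch Hnd u Hu HJu) as Hadj.
  assert (Hcl : closure (Jmin par ch lam beta) u Ja) by (apply (proj2 (Hsa u Ja)); exact Hadj).
  destruct Hadj as [_ [_ Hadj]]. destruct (Hadj u Ja Hcl) as [c [Hc1 Hc2]].
  pose proof (inner_close _ _ _ _ I1 Hc2 (1/8) ltac:(lra)).
  pose proof (inner_close _ _ _ _ I2 Hc1 (1/8) ltac:(lra)).
  simpl in H, H1. apply Rabs_def2 in H. apply Rabs_def2 in H1. lra.
Qed.
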